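(* Let $U$ be a $5$-unitrade with $|U|=12$. Then either $U=W\cup W'$ where $W,W'$ are disjoint $5$-unitrades each equivalent to $W_5$, or $U$ is equivalent to $S=\{\{1,2,3,5,6\}, \{1,2,4,5,6\}, \{1,3,4,5,6\}, \{2,3,4,5,6\}, \{1,2,3,5,7\}, \{1,2,4,5,7\}, \{1,3,4,5,7\}, \{2,3,4,5,7\}, \{1,2,3,6,7\}, \{1,2,4,6,7\}, \{1,3,4,6,7\}, \{2,3,4,6,7\}\}$.
   Context: A $k$-unitrade on a finite set $V$ is a set $U$ of $k$-element subsets (blocks) of $V$ such that every $(k-1)$-element subset of $V$ is contained in an even number of blocks of $U$. Two collections $U_1$ of subsets of $V_1$ and $U_2$ of subsets of $V_2$ are equivalent if there is an injection $f:V_1\to V_2$ with $U_2=\{f(u): u\in U_1\}$. $W_5$ denotes the set of all $5$-element subsets of a $6$-element set. *)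

(* Defs.v *)
From mathcomp Require Import all_boot.
Set Implicit Arguments. Unset Strict Implicit. Unset Printing Implicit Defensive.

Definition unitrade (V : finType) (k : nat) (U : {set {set V}}) : Prop :=
  (forall B, B \in U -> #|B| = k) /\
  (forall T : {set V}, #|T| = k.-1 -> ~~ odd #|[set B in U | T \subset B]|).

Definition equivalent (V1 V2 : finType) (U1 : {set {set V1}}) (U2 : {set {set V2}}) : Prop :=
  exists f : V1 -> V2, injective f /\ U2 = [set f @: (B : {set V1}) | B in U1].

Definition W5 : {set {set 'I_6}} := [set B : {set 'I_6} | #|B| == 5].

(* The set S on {1,...,7}, with label i represented by (i-1 : 'I_7). *)
Definition lab (n : nat) : 'I_7 := inord n.-1.
Definition blk (a b c d e : nat) : {set 'I_7} := [set lab a; lab b; lab c; lab d; lab e].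

Definition S7 : {set {set 'I_7}} :=
  [set blk 1 2 3 5 6; blk 1 2 4 5 6; blk 1 3 4 5 6; blk 2 3 4 5 6;
       blk 1 2 3 5 7; blk 1 2 4 5 7; blk 1 3 4 5 7; blk 2 3 4 5 7;
       blk 1 2 3 6 7; blk 1 2 4 6 7; blk 1 3 4 6 7; blk 2 3 4 6 7].

(* Main.v *)
Require Import Defs.
From mathcomp Require Import all_boot zify.
Set Implicit Arguments. Unset Strict Implicit. Unset Printing Implicit Defensive.

Definition Wk {V : finType} (A : {set V}) k := [set B : {set V} | (B \subset A) && (#|B| == k)].
Definition sdiff {V : finType} (U W : {set {set V}}) := (U :\: W) :|: (W :\: U).
Definition star {V : finType} (U : {set {set V}}) v := [set B in U | v \in B].
Definition link {V : finType} (U : {set {set V}}) v := [set B :\ v | B in star U v].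
Definition supp {V : finType} (U : {set {set V}}) := \bigcup_(B in U) B.

Lemma card_sdiff {T : finType} (X Y : {set T}) :
  #|(X :\: Y) :|: (Y :\: X)| + 2 * #|X :&: Y| = #|X| + #|Y|.
Proof.
have E : (X :\: Y) :&: (Y :\: X) = set0.
  by apply/setP => u; rewrite !inE; case: (u \in X); case: (u \in Y).
have := cardsUI (X :\: Y) (Y :\: X); rewrite E cards0 addn0 => ->.
have := cardsID Y X; have := cardsID X Y; rewrite setIC; lia.
Qed.

Lemma sdiff_unitrade {V : finType} k (U W : {set {set V}}) :
  unitrade k U -> unitrade k W -> unitrade k (sdiff U W).
Proof.
move=> [HU1 HU2] [HW1 HW2]; split.
  by move=> B; rewrite !inE => /orP[/andP[_ /HU1]|/andP[_ /HW1]].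
move=> T HT.
set U' := [set B in U | T \subset B]; set W' := [set B in W | T \subset B].
have -> : [set B in sdiff U W | T \subset B] = (U' :\: W') :|: (W' :\: U').
  apply/setP => B; rewrite !inE.
  by case: (B \in U); case: (B \in W); case: (T \subset B).
have := card_sdiff U' W' => /(congr1 odd).
rewrite oddD oddM /= oddD (negbTE (HU2 T HT)) (negbTE (HW2 T HT)) /=.
by rewrite addbF => ->.
Qed.

Lemma setD1_single {V : finType} (A B : {set V}) :
  B \subset A -> #|A| = #|B| + 1 -> exists a, [/\ a \in A, a \notin B & B = A :\ a].
Proof.
move=> sBA cA.
have c1 : #|A :\: B| == 1.
  by rewrite cardsD (setIidPr sBA) cA; apply/eqP; lia.
case/cards1P: c1 => a Ea.
have : a \in A :\: B by rewrite Ea set11.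
rewrite inE => /andP[aB aA]; exists a; split => //.
apply/setP => u; rewrite !inE.
case uB: (u \in B).
  rewrite (subsetP sBA u uB) andbT; apply/esym/negP => /eqP ua.
  by rewrite -ua uB in aB.
case uA: (u \in A); rewrite ?andbF //.
have : u \in A :\: B by rewrite inE uB uA.
by rewrite Ea inE => ->.
Qed.

Lemma setU1_single {V : finType} (T B : {set V}) :
  T \subset B -> #|B| = #|T| + 1 -> exists a, [/\ a \in B, a \notin T & B = a |: T].
Proof.
move=> sTB cB; case: (setD1_single sTB cB) => a [aB aT E].
exists a; split => //; by rewrite E setD1K.
Qed.

Lemma Wk_card {V : finType} (A : {set V}) k : #|A| = k.+1 -> #|Wk A k| = k.+1.
Proof.
move=> cA.
have -> : Wk A k = [set A :\ a | a in A].
  apply/setP => B; rewrite inE; apply/andP/imsetP.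
    move=> [sBA /eqP cB].
    have cA' : #|A| = #|B| + 1 by rewrite cA cB addn1.
    have [a [aA aB ->]] := setD1_single sBA cA'.
    by exists a.
  move=> [a aA ->]; split; first exact: subsetDl.
  by apply/eqP; have := cardsD1 a A; rewrite aA cA /=; lia.
rewrite card_in_imset ?cA // => a b aA bA E.
apply/eqP; apply: contraT => ab.
have : b \in A :\ a by rewrite !inE eq_sym ab.
by rewrite E !inE eqxx.
Qed.

Lemma Wk_unitrade {V : finType} (A : {set V}) k :
  1 <= k -> #|A| = k.+1 -> unitrade k (Wk A k).
Proof.
move=> k1 cA; split; first by move=> B; rewrite inE => /andP[_ /eqP].
move=> T cT.
case sTA: (T \subset A); last first.
  have -> : [set B in Wk A k | T \subset B] = set0.
    apply/setP => B; rewrite !inE; apply/negP => /andP[/andP[sBA _] sTB].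
    by rewrite (subset_trans sTB sBA) in sTA.
  by rewrite cards0.
have -> : [set B in Wk A k | T \subset B] = [set a |: T | a in A :\: T].
  apply/setP => B; rewrite !inE; apply/andP/imsetP.
    move=> [/andP[sBA /eqP cB] sTB].
    have cB' : #|B| = #|T| + 1 by rewrite cB cT; lia.
    have [a [aB aT ->]] := setU1_single sTB cB'.
    by exists a => //; rewrite inE aT (subsetP sBA).
  move=> [a]; rewrite inE => /andP[aT aA] ->.
  split; last exact: subsetUr; apply/andP; split.
    by rewrite subUset sub1set aA sTA.
  by rewrite cardsU1 aT cT; apply/eqP; lia.
rewrite card_in_imset; last first.
  move=> a b; rewrite !inE => /andP[aT _] /andP[bT _] /= E.
  have : a \in b |: T by rewrite -E setU11.
  by rewrite !inE (negbTE aT) orbF => /eqP.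
rewrite cardsD (setIidPr sTA) cA cT.
by have -> : k.+1 - k.-1 = 2 by lia.
Qed.


Lemma other {V : finType} k (U : {set {set V}}) (B T : {set V}) :
  unitrade k U -> B \in U -> T \subset B -> #|T| = k.-1 ->
  exists2 C, C \in U & (C != B) && (T \subset C).
Proof.
move=> [_ HU] BU sTB cT.
have := HU T cT; set X := [set C in U | T \subset C] => HX.
have BX : B \in X by rewrite inE BU sTB.
case: (set_0Vmem (X :\ B)) => [E | [C]].
  by move: HX; rewrite (cardsD1 B X) E cards0 BX.
by rewrite !inE => /and3P[CB CU sTC]; exists C => //; rewrite CB.
Qed.

Definition nb {V : finType} (U : {set {set V}}) (B : {set V}) x :=
  odflt B [pick C in U | (C != B) && (B :\ x \subset C)].

Lemma nbP {V : finType} k (U : {set {set V}}) (B : {set V}) x :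
  unitrade k U -> B \in U -> x \in B ->
  [/\ nb U B x \in U, nb U B x != B & B :\ x \subset nb U B x].
Proof.
move=> HU BU xB; rewrite /nb; case: pickP => [C /andP[CU /andP[CB sC]] | H] /=.
  by [].
have cB : #|B| = k by case: HU => H1 _; apply: H1.
have cT : #|B :\ x| = k.-1 by have := cardsD1 x B; rewrite xB cB; lia.
have [C CU /andP[CB sC]] := other HU BU (subD1set B x) cT.
by have := H C; rewrite CU CB sC.
Qed.

Lemma nb_notin {V : finType} k (U : {set {set V}}) (B : {set V}) x :
  unitrade k U -> B \in U -> x \in B -> x \notin nb U B x.
Proof.
move=> HU BU xB; have [NU NB sN] := nbP HU BU xB.
apply/negP => xN; move/negP: NB; apply; apply/eqP/esym.
have cB : #|B| = k by case: HU => H1 _; apply: H1.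
have cN : #|nb U B x| = k by case: HU => H1 _; apply: H1.
have sBN : B \subset nb U B x.
  apply/subsetP => u uB; case: (eqVneq u x) => [->//|ux].
  by apply: (subsetP sN); rewrite !inE ux.
apply/eqP. rewrite eqEcard cB cN leqnn andbT. exact: sBN.
Qed.

Lemma nb_inj {V : finType} k (U : {set {set V}}) (B : {set V}) :
  unitrade k U -> B \in U -> {in B &, injective (nb U B)}.
Proof.
move=> HU BU x y xB yB E; apply: contraTeq (nb_notin HU BU xB) => xy.
have [_ _ sN] := nbP HU BU yB.
by rewrite E negbK (subsetP sN) // !inE xy.
Qed.

Lemma F1 {V : finType} k (U : {set {set V}}) :
  2 <= k -> unitrade k U -> U != set0 ->
  [/\ k < #|U|, k < #|supp U| &
     (#|U| = k.+1 -> exists A : {set V}, #|A| = k.+1 /\ U = Wk A k)].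
Proof.
move=> k2 HU; case/set0Pn => B BU.
have cBl : forall C, C \in U -> #|C| = k by case: HU => H1 _.
have cB := cBl B BU.
have [x0 x0B] : exists x, x \in B by apply/card_gt0P; rewrite cB; lia.
set Y := B |: (nb U B @: B).
have sYU : Y \subset U.
  rewrite subUset sub1set BU; apply/subsetP => C /imsetP[x xB ->].
  by have [] := nbP HU BU xB.
have BnY : B \notin nb U B @: B.
  by apply/imsetP => -[x xB E]; have [_ + _] := nbP HU BU xB; rewrite -E eqxx.
have cY : #|Y| = k.+1 by rewrite cardsU1 BnY card_in_imset ?cB //; exact: nb_inj HU BU.
have [N0U N0B sN0] := nbP HU BU x0B.
have nsub : ~~ (nb U B x0 \subset B).
  by apply: contra N0B => sNB; rewrite eqEcard sNB cB (cBl _ N0U) leqnn.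
have [w wN0 wB] := subsetPn nsub.
split.
- by have := subset_leq_card sYU; rewrite cY.
- have : w |: B \subset supp U.
    rewrite subUset sub1set; apply/andP; split.
      by apply/bigcupP; exists (nb U B x0).
    by apply: (bigcup_sup B BU).
  by move/subset_leq_card; rewrite cardsU1 wB cB.
move=> cU.
have EU : U = Y by apply/esym/eqP; rewrite eqEcard sYU cU cY leqnn.
have wNy : forall y, y \in B -> w \in nb U B y.
  move=> y yB; case: (eqVneq y x0) => [->//|yx0].
  have yN0 : y \in nb U B x0 by apply: (subsetP sN0); rewrite !inE yx0.
  set S := nb U B x0 :\ y.
  have cS : #|S| = k.-1 by rewrite /S; move: (cardsD1 y (nb U B x0)); rewrite yN0 (cBl _ N0U) add1n => ->.
  have [C CU /andP[CN sSC]] := other HU N0U (subD1set _ y) cS.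
  have wS : w \in S by rewrite !inE wN0 andbT; apply: contraNneq wB => ->.
  have : C \in Y by rewrite -EU.
  rewrite !inE => /orP[/eqP CB | /imsetP[z zB Cz]].
    by move: (subsetP sSC w wS); rewrite CB (negbTE wB).
  suff yz : y = z by rewrite yz -Cz (subsetP sSC).
  apply/eqP; apply: contraT => yz.
  have zx0 : z != x0 by apply: contraNneq CN => zx; rewrite Cz zx.
  have zS : z \in S.
    by rewrite !inE eq_sym yz; apply: (subsetP sN0); rewrite !inE zx0.
  by move: (nb_notin HU BU zB); rewrite -Cz (subsetP sSC).
exists (w |: B); split; first by rewrite cardsU1 wB cB.
apply/eqP; rewrite eqEcard Wk_card ?cardsU1 ?wB ?cB // cU leqnn andbT.
apply/subsetP => C CU; rewrite inE (cBl _ CU) eqxx andbT.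
have : C \in Y by rewrite -EU.
rewrite !inE => /orP[/eqP -> | /imsetP[y yB ->]].
  exact: subsetUr.
have [NU _ sN] := nbP HU BU yB.
apply/subsetP => u uN; rewrite !inE.
case: (eqVneq u w) => //= uw.
apply: contraT => uB.
have sub : w |: (B :\ y) \subset nb U B y by rewrite subUset sub1set wNy.
have : #|w |: (B :\ y)| = k.
  rewrite cardsU1 !inE (negbTE wB) andbF /=.
  by move: (cardsD1 y B); rewrite yB cB => ->.
move=> cW.
have : w |: (B :\ y) = nb U B y by apply/eqP; rewrite eqEcard sub cW (cBl _ NU) leqnn.
move=> E; move: uN; rewrite -E !inE (negbTE uw) /=.
by move/andP => [_ uB']; rewrite uB' in uB.
Qed.


Lemma card_link {V : finType} (U : {set {set V}}) v : #|link U v| = #|star U v|.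
Proof.
apply: card_in_imset => B C; rewrite !inE => /andP[_ vB] /andP[_ vC] E.
by rewrite -(setD1K vB) -(setD1K vC) E.
Qed.

Lemma link_unitrade {V : finType} k (U : {set {set V}}) v :
  2 <= k -> unitrade k U -> unitrade k.-1 (link U v).
Proof.
move=> k2 [HU1 HU2]; split.
  move=> C /imsetP[B]; rewrite inE => /andP[BU vB] ->.
  by move: (cardsD1 v B); rewrite vB (HU1 _ BU) add1n => ->.
move=> T cT.
case vT: (v \in T).
  have -> : [set C in link U v | T \subset C] = set0.
    apply/setP => C; rewrite !inE; apply/negP => /andP[/imsetP[B _ ->] sT].
    by move: (subsetP sT v vT); rewrite !inE eqxx.
  by rewrite cards0.
have -> : [set C in link U v | T \subset C] =
          [set B :\ v | B in [set B in U | (v |: T) \subset B]].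
  apply/setP => C; rewrite inE; apply/andP/imsetP.
    move=> [/imsetP[B]]; rewrite inE => /andP[BU vB] -> sT.
    exists B => //; rewrite inE BU subUset sub1set vB /=.
    by apply: subset_trans sT (subD1set B v).
  move=> [B]; rewrite inE => /andP[BU]; rewrite subUset sub1set => /andP[vB sTB] ->.
  split; first by apply/imsetP; exists B => //; rewrite inE BU vB.
  apply/subsetP => u uT; rewrite !inE (subsetP sTB) // andbT.
  by apply: contraFneq vT => <-.
rewrite card_in_imset; last first.
  move=> B C; rewrite !inE => /andP[_ sB] /andP[_ sC] E.
  have vB : v \in B by apply: (subsetP sB); rewrite setU11.
  have vC : v \in C by apply: (subsetP sC); rewrite setU11.
  by rewrite -(setD1K vB) -(setD1K vC) E.
apply: HU2; rewrite cardsU1 vT cT; lia.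
Qed.

Lemma in_supp {V : finType} (U : {set {set V}}) v :
  (v \in supp U) = (0 < #|star U v|).
Proof.
apply/bigcupP/card_gt0P.
  by move=> [B BU vB]; exists B; rewrite inE BU vB.
by move=> [B]; rewrite inE => /andP[BU vB]; exists B.
Qed.

Lemma sum_star {V : finType} (U : {set {set V}}) :
  \sum_(v : V) #|star U v| = \sum_(B in U) #|B|.
Proof.
have E : forall v, #|star U v| = \sum_(B in U) (v \in B).
  move=> v; rewrite -sum1_card big_mkcond /= [RHS]big_mkcond /=.
  by apply: eq_bigr => B _; rewrite !inE; case: (B \in U); case: (v \in B).
rewrite (eq_bigr _ (fun v _ => E v)) exchange_big /=.
apply: eq_bigr => B _; rewrite -sum1_card big_mkcond /=.
by rewrite [RHS]big_mkcond; apply: eq_bigr => v _; case: (v \in B).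
Qed.

Lemma sum_lower {V : finType} (U : {set {set V}}) c :
  (forall v, v \in supp U -> c <= #|star U v|) ->
  #|supp U| * c <= \sum_(v : V) #|star U v|.
Proof.
move=> H; rewrite -sum_nat_const [X in _ <= X](bigID (mem (supp U))) /=.
apply: (leq_trans _ (leq_addr _ _)); apply: leq_sum => v; exact: H.
Qed.

Lemma sum_const_card {V : finType} (U : {set {set V}}) k :
  (forall B, B \in U -> #|B| = k) -> \sum_(B in U) #|B| = #|U| * k.
Proof. by move=> H; rewrite -sum_nat_const; apply: eq_bigr. Qed.

Lemma peel {V : finType} K (U : {set {set V}}) v :
  3 <= K -> unitrade K U -> #|star U v| = K ->
  exists A : {set V}, [/\ #|A| = K.+1, unitrade K (Wk A K) &
     (#|U :&: Wk A K| = K \/ #|U :&: Wk A K| = K.+1)].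
Proof.
move=> K3 HU cs.
have HL := link_unitrade v (ltnW K3) HU.
have cL : #|link U v| = K.-1.+1 by rewrite card_link cs; lia.
have L0 : link U v != set0 by rewrite -card_gt0 cL.
have [_ _ /(_ cL) [A0 [cA0 EL]]] := F1 (ltac:(lia) : 2 <= K.-1) HL L0.
have vA0 : v \notin A0.
  apply/negP => vA.
  have [a aA av] : exists2 a, a \in A0 & a != v.
    have : 0 < #|A0 :\ v|.
      move: (cardsD1 v A0); rewrite vA cA0 => E; clear -E K3; lia.
    by case/card_gt0P => a; rewrite !inE => /andP[av aA]; exists a.
  have : A0 :\ a \in link U v.
    rewrite EL inE subD1set /=.
    by move: (cardsD1 a A0); rewrite aA cA0 add1n => -[<-].
  case/imsetP => B _ E.
  by move: (setD11 v B); rewrite -E !inE eq_sym av vA.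
have HU1 : forall B, B \in U -> #|B| = K by case: HU.
exists (v |: A0); split.
- by rewrite cardsU1 vA0 cA0; lia.
- by apply: Wk_unitrade; [lia | rewrite cardsU1 vA0 cA0; lia].
have s1 : star U v \subset U :&: Wk (v |: A0) K.
  apply/subsetP => B; rewrite !inE => /andP[BU vB]; rewrite BU HU1 // eqxx andbT /=.
  have : B :\ v \in link U v by apply/imsetP; exists B => //; rewrite inE BU vB.
  rewrite EL inE => /andP[sB _].
  by rewrite -(setD1K vB) setUS.
have s2 : U :&: Wk (v |: A0) K \subset A0 |: star U v.
  apply/subsetP => B; rewrite !inE => /andP[BU /andP[sB /eqP cB]].
  case vB: (v \in B); first by rewrite BU orbT.
  apply/orP; left; rewrite eqEcard cA0 cB (ltn_predK K3) leqnn andbT.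
  apply/subsetP => u uB; move: (subsetP sB u uB); rewrite !inE.
  by case/orP => // /eqP uv; rewrite -uv uB in vB.
have l1 := subset_leq_card s1.
have l2 := subset_leq_card s2.
move: l1 l2; rewrite cardsU1 cs; set c := #|U :&: _|.
case: (A0 \notin star U v) => /= l1 l2; clear -l1 l2; lia.
Qed.


Lemma gap {V : finType} k : 2 <= k -> forall U : {set {set V}},
  unitrade k U -> 0 < #|U| -> #|U| < 2 * k -> #|U| = k.+1.
Proof.
elim: k => [//|k IH] k2 U HU p1 p2.
have U0 : U != set0 by rewrite -card_gt0.
have [lo sup _] := F1 k2 HU U0.
case: (eqVneq k 1) => [k1|kn1].
  by move: lo p2; rewrite k1 => lo p2; clear -lo p2; lia.
have k2' : 2 <= k by clear -k2 kn1; lia.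
apply/eqP; apply: contraT => mn.
have m2 : k.+3 <= #|U| by clear -lo mn; lia.
have HU1 : forall B, B \in U -> #|B| = k.+1 by case: HU.
have deg : forall v, v \in supp U -> 2 * k <= #|star U v|.
  move=> v; rewrite in_supp => s0.
  have HL := link_unitrade v k2 HU.
  have L0 : link U v != set0 by rewrite -card_gt0 card_link.
  have [loL _ _] := F1 k2' HL L0.
  rewrite leqNgt; apply/negP => lt.
  have := IH k2' _ HL; rewrite card_link => /(_ s0 lt) cs.
  have [A [cA HW [c1|c1]]] := peel (ltac:(clear -k2'; lia) : 3 <= k.+1) HU cs;
  have HS := sdiff_unitrade HU HW;
  have := card_sdiff U (Wk A k.+1); rewrite Wk_card // c1 => E;
  (have S0 : sdiff U (Wk A k.+1) != set0 by rewrite -card_gt0 /sdiff; clear -E m2 p2; lia);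
  have [loS _ _] := F1 (ltac:(clear -k2'; lia) : 2 <= k.+1) HS S0;
  move: loS; rewrite /sdiff; clear -E m2 p2; lia.
have := sum_lower deg; rewrite sum_star (sum_const_card HU1) => H.
have : k.+2 * (2 * k) <= #|supp U| * (2 * k) by rewrite leq_mul2r sup orbT.
clear -H p2 k2' => H2; nia.
Qed.


Lemma eq_inord7 (u : 'I_7) k : k < 7 -> (u == inord k) = (nat_of_ord u == k).
Proof. by move=> hk; rewrite -val_eqE /= inordK. Qed.

Ltac decI7 := apply/setP => -[[|[|[|[|[|[|[|?]]]]]]] ?]; rewrite !inE /lab /= ?eq_inord7 //=.

Definition o7 k : 'I_7 := inord k.
Definition D7 a b : {set 'I_7} := [set: 'I_7] :\ o7 a :\ o7 b.

Lemma S7lit : S7 = [set D7 3 6; D7 2 6; D7 1 6; D7 0 6; D7 3 5; D7 2 5; D7 1 5; D7 0 5;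
                     D7 3 4; D7 2 4; D7 1 4; D7 0 4].
Proof.
rewrite /S7.
have e1 : blk 1 2 3 5 6 = D7 3 6 by rewrite /D7 /o7; decI7.
have e2 : blk 1 2 4 5 6 = D7 2 6 by rewrite /D7 /o7; decI7.
have e3 : blk 1 3 4 5 6 = D7 1 6 by rewrite /D7 /o7; decI7.
have e4 : blk 2 3 4 5 6 = D7 0 6 by rewrite /D7 /o7; decI7.
have e5 : blk 1 2 3 5 7 = D7 3 5 by rewrite /D7 /o7; decI7.
have e6 : blk 1 2 4 5 7 = D7 2 5 by rewrite /D7 /o7; decI7.
have e7 : blk 1 3 4 5 7 = D7 1 5 by rewrite /D7 /o7; decI7.
have e8 : blk 2 3 4 5 7 = D7 0 5 by rewrite /D7 /o7; decI7.
have e9 : blk 1 2 3 6 7 = D7 3 4 by rewrite /D7 /o7; decI7.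
have e10 : blk 1 2 4 6 7 = D7 2 4 by rewrite /D7 /o7; decI7.
have e11 : blk 1 3 4 6 7 = D7 1 4 by rewrite /D7 /o7; decI7.
have e12 : blk 2 3 4 6 7 = D7 0 4 by rewrite /D7 /o7; decI7.
by rewrite e1 e2 e3 e4 e5 e6 e7 e8 e9 e10 e11 e12.
Qed.

Definition I4 : {set 'I_7} := [set i : 'I_7 | i < 4].
Definition J3 : {set 'I_7} := [set i : 'I_7 | 4 <= i].

Lemma ord_o7 m (H : m < 7) : Ordinal H = o7 m.
Proof. by apply/val_inj; rewrite /= inordK. Qed.

Ltac ex12 :=
  first [ by exists (o7 3, o7 6); rewrite // !inE /o7 !inordK
        | by exists (o7 2, o7 6); rewrite // !inE /o7 !inordK
        | by exists (o7 1, o7 6); rewrite // !inE /o7 !inordK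
        | by exists (o7 0, o7 6); rewrite // !inE /o7 !inordK
        | by exists (o7 3, o7 5); rewrite // !inE /o7 !inordK
        | by exists (o7 2, o7 5); rewrite // !inE /o7 !inordK
        | by exists (o7 1, o7 5); rewrite // !inE /o7 !inordK
        | by exists (o7 0, o7 5); rewrite // !inE /o7 !inordK
        | by exists (o7 3, o7 4); rewrite // !inE /o7 !inordK
        | by exists (o7 2, o7 4); rewrite // !inE /o7 !inordK
        | by exists (o7 1, o7 4); rewrite // !inE /o7 !inordK
        | by exists (o7 0, o7 4); rewrite // !inE /o7 !inordK ].

Lemma S7E : S7 = [set [set: 'I_7] :\ p.1 :\ p.2 | p in setX I4 J3].
Proof.
apply/eqP; rewrite eqEsubset; apply/andP; split.
  rewrite S7lit; apply/subsetP => B; rewrite !inE.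
  move=> H; apply/imsetP.
  repeat (case/orP: H => [H | /eqP ->]; last by ex12).
  by move/eqP: H => ->; ex12.
rewrite S7lit; apply/subsetP => B /imsetP[[[i Hi] [j Hj]]]; rewrite !inE /= => /andP[i4 j4] ->.
rewrite (ord_o7 Hi) (ord_o7 Hj).
do 4! (case: i Hi i4 => [|i] Hi i4; first
  (do 4! (case: j Hj j4 => [|j] Hj j4; first by []);
   do 3! (case: j Hj j4 => [|j] Hj j4; first by rewrite /D7 !eqxx ?orbT);
   by [])).
by [].
Qed.

Lemma imsetD2 {V : finType} n (f : 'I_n -> V) (S : {set V}) i j :
  injective f -> (forall x, x \in S <-> exists k, f k = x) ->
  f @: ([set: 'I_n] :\ i :\ j) = S :\ f i :\ f j.
Proof.
move=> finj fS; apply/setP => u; apply/imsetP/idP.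
  move=> [k]; rewrite !inE => /andP[kj /andP[ki _]] ->.
  rewrite !(inj_eq finj) kj ki /=; apply/fS; by exists k.
rewrite !inE => /andP[uj /andP[ui /fS [k fk]]].
exists k => //; rewrite !inE ?andbT; apply/andP; split.
  by apply: (contraNneq _ uj) => kj; rewrite -fk kj.
by apply: (contraNneq _ ui) => ki; rewrite -fk ki.
Qed.

Lemma eqW5 {V : finType} (A : {set V}) : #|A| = 6 -> equivalent W5 (Wk A 5).
Proof.
move=> cA; have [x0 _] : exists x, x \in A by apply/card_gt0P; rewrite cA.
set s := enum A.
have ss : size s = 6 by rewrite -cA cardE.
have us : uniq s := enum_uniq _.
pose f := fun i : 'I_6 => nth x0 s i.
have finj : injective f.
  by move=> i j /eqP; rewrite /f nth_uniq ?ss // => /eqP; apply: val_inj.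
have fA : forall i, f i \in A by move=> i; rewrite /f -mem_enum mem_nth // ss.
have fs : forall x, x \in A -> exists i, f i = x.
  move=> x xA; have xs : x \in s by rewrite mem_enum.
  have h : index x s < 6 by rewrite -ss index_mem.
  by exists (Ordinal h); rewrite /f /= nth_index.
exists f; split => //.
apply/setP => C; apply/idP/imsetP.
  rewrite inE => /andP[sCA /eqP cC].
  have E : f @: (f @^-1: C) = C.
    apply/setP => x; apply/imsetP/idP.
      by move=> [i]; rewrite inE => iC ->.
    move=> xC; have [i fi] := fs x (subsetP sCA x xC).
    by exists i => //; rewrite inE fi.
  exists (f @^-1: C); last by rewrite E.
  by rewrite inE -(card_imset _ finj) E cC.
move=> [B]; rewrite inE => /eqP cB ->; rewrite inE card_imset // cB eqxx andbT.
by apply/subsetP => x /imsetP[i _ ->].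
Qed.

Lemma eqS7 {V : finType} (P Q : {set V}) :
  #|P| = 4 -> #|Q| = 3 -> [disjoint P & Q] ->
  equivalent S7 [set (P :|: Q) :\ p.1 :\ p.2 | p in setX P Q].
Proof.
move=> cP cQ dPQ; have [x0 _] : exists x, x \in P by apply/card_gt0P; rewrite cP.
set s := enum P ++ enum Q.
have sP : size (enum P) = 4 by rewrite -cP cardE.
have sQ : size (enum Q) = 3 by rewrite -cQ cardE.
have ss : size s = 7 by rewrite size_cat sP sQ.
have us : uniq s.
  rewrite cat_uniq !enum_uniq andbT /=; apply/hasPn => x; rewrite !mem_enum => xQ.
  by rewrite (disjointFl dPQ xQ).
pose f := fun i : 'I_7 => nth x0 s i.
have finj : injective f.
  by move=> i j /eqP; rewrite /f nth_uniq ?ss // => /eqP; apply: val_inj.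
have fP : forall i : 'I_7, i < 4 -> f i \in P.
  by move=> i i4; rewrite /f nth_cat sP i4 -mem_enum mem_nth // sP.
have fQ : forall i : 'I_7, 4 <= i -> f i \in Q.
  move=> i i4; rewrite /f nth_cat sP ltnNge i4 /= -mem_enum mem_nth // sQ.
  by have := ltn_ord i; clear -i4; lia.
have gP : forall x, x \in P -> exists2 i : 'I_7, i < 4 & f i = x.
  move=> x xP; have xs : x \in enum P by rewrite mem_enum.
  have h : index x (enum P) < 7 by apply: (leq_trans (n := 4)); rewrite // -sP index_mem.
  exists (Ordinal h); first by rewrite /= -sP index_mem.
  by rewrite /f /= nth_cat index_mem xs nth_index.
have gQ : forall x, x \in Q -> exists2 i : 'I_7, 4 <= i & f i = x.
  move=> x xQ; have xs : x \in enum Q by rewrite mem_enum.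
  have hi : index x (enum Q) < 3 by rewrite -sQ index_mem.
  have h : 4 + index x (enum Q) < 7 by clear -hi; lia.
  exists (Ordinal h); first by rewrite /= leq_addr.
  by rewrite /f /= nth_cat sP ltnNge leq_addr /= addKn nth_index.
have fS : forall x, x \in P :|: Q <-> exists k, f k = x.
  move=> x; split.
    rewrite inE => /orP[/gP [i _ <-] | /gQ [i _ <-]]; by exists i.
  move=> [k <-]; rewrite inE; case: (ltnP k 4) => k4; first by rewrite fP.
  by rewrite fQ ?orbT.
exists f; split => //.
apply/setP => C; apply/imsetP/imsetP.
  move=> [[x y]]; rewrite inE /= => /andP[xP yQ] ->.
  have [i i4 fi] := gP x xP; have [j j4 fj] := gQ y yQ.
  exists ([set: 'I_7] :\ i :\ j); last by rewrite (imsetD2 _ _ finj fS) fi fj.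
  by rewrite S7E; apply/imsetP; exists (i, j) => //; rewrite !inE i4 j4.
move=> [B]; rewrite S7E => /imsetP[[i j]]; rewrite !inE /= => /andP[i4 j4] -> ->.
exists (f i, f j); first by rewrite inE /= fP ?fQ.
by rewrite (imsetD2 _ _ finj fS).
Qed.


Lemma D1C {V : finType} (A : {set V}) a b : A :\ a :\ b = A :\ b :\ a.
Proof. by apply/setP => t; rewrite !inE; case: (t == a); case: (t == b). Qed.

Lemma card_sum {T : finType} (U : {set T}) (p : pred T) :
  #|[set B in U | p B]| = \sum_(B in U) p B.
Proof.
rewrite -sum1_card [RHS]big_mkcond [LHS]big_mkcond /=.
by apply: eq_bigr => B _; rewrite !inE; case: (B \in U); case: (p B).
Qed.

Lemma sum_eq1 {T : finType} (U : {set T}) P :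
  \sum_(B in U) (B == P) = (P \in U).
Proof.
rewrite big_mkcond /= (bigD1 P) //= eqxx big1 ?addn0.
  by case: (P \in U).
by move=> B /negbTE ->; case: (B \in U).
Qed.

Lemma compl2 {V : finType} (S B : {set V}) a b :
  B \subset S -> #|B| = 5 -> #|S| = 7 -> a \in S -> b \in S -> a != b ->
  (B == S :\ a :\ b) = (a \notin B) && (b \notin B).
Proof.
move=> sBS cB cS aS bS ab; apply/eqP/andP.
  by move=> ->; rewrite !inE !eqxx /= andbF.
move=> [aB bB]; apply/eqP; rewrite eqEcard; apply/andP; split.
  apply/subsetP => t tB; rewrite !inE (subsetP sBS) // andbT.
  apply/andP; split; [apply: (contraNneq _ bB) | apply: (contraNneq _ aB)] => <-; exact: tB.
have := cardsD1 a S; rewrite aS cS (cardsD1 b (S :\ a)) !inE eq_sym ab bS /=.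
by rewrite cB => E; clear -E; lia.
Qed.

Lemma count3 {V : finType} (S B : {set V}) x y z :
  B \subset S -> #|B| = 5 -> #|S| = 7 -> x \in S -> y \in S -> z \in S ->
  x != y -> x != z -> y != z ->
  ((S :\ x :\ y :\ z) \subset B : nat) =
  (B == S :\ y :\ z) + (B == S :\ x :\ z) + (B == S :\ x :\ y).
Proof.
move=> sBS cB cS xS yS zS xy xz yz.
rewrite !compl2 //.
set T := S :\ x :\ y :\ z; set R := B :\ x :\ y :\ z.
have HB : #|B| = (x \in B) + ((y \in B) + ((z \in B) + #|R|)).
  rewrite (cardsD1 x B) (cardsD1 y (B :\ x)) (cardsD1 z (B :\ x :\ y)) !inE.
  by rewrite (eq_sym y x) xy (eq_sym z x) xz (eq_sym z y) yz.
have HT : #|T| = 4.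
  have := cardsD1 x S; rewrite (cardsD1 y (S :\ x)) (cardsD1 z (S :\ x :\ y)) !inE.
  rewrite (eq_sym y x) xy (eq_sym z x) xz (eq_sym z y) yz xS yS zS cS /= => E.
  by rewrite /T; clear -E; lia.
have sRT : R \subset T.
  by apply/subsetP => t; rewrite !inE => /and4P[-> -> -> /(subsetP sBS) ->].
have ET : (T \subset B) = (#|R| == 4).
  apply/idP/eqP.
    move=> sTB; apply/eqP; rewrite -HT eqn_leq (subset_leq_card sRT) /=.
    apply: subset_leq_card; apply/subsetP => t tT; move: (subsetP sTB t tT).
    by move: tT; rewrite !inE => /and4P[-> -> -> _] ->.
  move=> cR; have E : R == T by rewrite eqEcard sRT cR HT leqnn.
  by rewrite -(eqP E); apply/subsetP => t; rewrite !inE => /and4P[_ _ _ ->].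
have R4 : #|R| <= 4 by rewrite -HT subset_leq_card.
rewrite ET; move: HB; rewrite cB.
case: (x \in B); case: (y \in B); case: (z \in B); case: (eqVneq #|R| 4) => /= HR;
clear -HR R4; lia.
Qed.

Lemma seven {V : finType} (U : {set {set V}}) (S : {set V}) :
  unitrade 5 U -> #|U| = 12 -> #|S| = 7 -> (forall B, B \in U -> B \subset S) ->
  equivalent S7 U.
Proof.
move=> HU cU cS sUS.
have HU1 : forall B, B \in U -> #|B| = 5 by case: HU.
pose e x y := (S :\ x :\ y) \in U.
have eC : forall x y, e x y = e y x by move=> x y; rewrite /e D1C.
have triple : forall x y z, x \in S -> y \in S -> z \in S ->
    x != y -> x != z -> y != z -> ~~ odd (e y z + e x z + e x y).
  move=> x y z xS yS zS xy xz yz.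
  have HT : #|S :\ x :\ y :\ z| = 4.
    have := cardsD1 x S; rewrite (cardsD1 y (S :\ x)) (cardsD1 z (S :\ x :\ y)) !inE.
    rewrite (eq_sym y x) xy (eq_sym z x) xz (eq_sym z y) yz xS yS zS cS /= => E.
    by clear -E; lia.
  have := (proj2 HU) _ HT; rewrite card_sum.
  rewrite (eq_bigr (fun B => (B == S :\ y :\ z) + (B == S :\ x :\ z) + (B == S :\ x :\ y))).
    by rewrite !big_split /= !sum_eq1.
  move=> B BU; apply: count3 => //; [exact: sUS | exact: HU1].
have [p pS] : exists p, p \in S by apply/card_gt0P; rewrite cS.
pose c t := (t != p) && e p t.
have col : forall a b, a \in S -> b \in S -> a != b -> e a b = c a (+) c b.
  move=> a b aS bS ab; rewrite /c.
  case: (eqVneq a p) => [ap|ap].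
    by rewrite ap /=; move: ab; rewrite ap eq_sym => ->.
  case: (eqVneq b p) => [bp|bp] /=.
    by rewrite bp eC addbF.
  have := triple p a b pS aS bS; rewrite eq_sym ap eq_sym bp ab => /(_ erefl erefl erefl).
  by case: (e a b); case: (e p b); case: (e p a).
pose X f := [set t in S | c t == f].
pose Y f := [set t in S | c t != f].
have UE : forall f, U = [set S :\ q.1 :\ q.2 | q in setX (X f) (Y f)].
  move=> f; apply/setP => B; apply/idP/imsetP.
    move=> BU.
    have c2 : #|S :\: B| == 2.
      by rewrite cardsD (setIidPr (sUS _ BU)) cS (HU1 _ BU).
    case/cards2P: c2 => x [y [xy E]].
    have xS : x \in S.
      have : x \in S :\: B by rewrite E !inE eqxx.
      by rewrite inE => /andP[].
    have yS : y \in S.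
      have : y \in S :\: B by rewrite E !inE eqxx orbT.
      by rewrite inE => /andP[].
    have EB : B = S :\ x :\ y.
      apply/setP => t; rewrite !inE.
      have : (t \in S :\: B) = (t == x) || (t == y) by rewrite E !inE.
      rewrite inE; case tB: (t \in B); rewrite /= ?andbF.
        by rewrite (subsetP (sUS _ BU) t tB) => /esym/norP[-> ->].
      by case: (t \in S) => /=; rewrite ?andbF // => ->; case: (t == x); case: (t == y).
    have exy : e x y by rewrite /e -EB.
    rewrite col // in exy.
    case: (eqVneq (c x) f) => cx.
      exists (x, y) => //; rewrite !inE /= xS yS cx /=.
      by move: exy; rewrite cx; clear cx; case: (c y); case: f.
    exists (y, x); last by rewrite /= D1C.
    rewrite !inE /= xS yS cx andbT /=.
    by move: exy cx; case: (c y); case: (c x); case: f.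
  move=> [[x y]]; rewrite !inE /= => /andP[/andP[xS cx] /andP[yS cy]] ->.
  have xy : x != y by apply: contraNneq cy => <-.
  by rewrite -/(e x y) col //; move: cx cy; case: (c x); case: (c y); case: f.
have cardE : forall f, #|X f| * #|Y f| = 12 /\ #|X f| + #|Y f| = 7.
  move=> f; split.
    rewrite -cardsX -cU [in RHS](UE f) card_in_imset //.
    move=> [x y] [x' y']; rewrite !inE /= => /andP[/andP[xS cx] /andP[yS cy]].
    move=> /andP[/andP[xS' cx'] /andP[yS' cy']] E.
    have hx : x \notin S :\ x' :\ y' by rewrite -E !inE eqxx andbF.
    have hy : y \notin S :\ x' :\ y' by rewrite -E !inE eqxx.
    move: hx hy; rewrite !inE xS yS !andbT !negb_and !negbK.
    have bad : forall a b, c a == f -> c b != f -> a = b -> False.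
      by move=> a b /eqP ha hb eab; rewrite -eab ha eqxx in hb.
    case/orP => /eqP ex; case/orP => /eqP ey.
    - by case: (bad _ _ cx cy' ex).
    - by case: (bad _ _ cx cy' ex).
    - by rewrite ex ey.
    - by case: (bad _ _ cx cy); rewrite ex ey.
  rewrite -cS -(cardsID [set t | c t == f] S); congr (_ + _).
    by apply: eq_card => t; rewrite !inE.
  by apply: eq_card => t; rewrite !inE andbC.
have XY : #|X false| = #|Y true|.
  by apply: eq_card => t; rewrite !inE; case: (c t).
have [f [cX cY]] : exists f, #|X f| = 4 /\ #|Y f| = 3.
  have [h1 h2] := cardE true; have [h3 h4] := cardE false.
  have : #|X true| = 4 \/ #|X true| = 3.
    have : #|X true| <= 7 by rewrite -h2 leq_addr.
    move: h1 h2; clear; move: #|X true| #|Y true| => a b.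
    case: a => [|[|[|[|[|[|[|[|a]]]]]]]] //= h1 h2 _; try lia.
  case=> h; [exists true | exists false]; split => //; clear -h h2 h3 h4 XY; lia.
have disj : [disjoint X f & Y f].
  by rewrite -setI_eq0; apply/eqP/setP => t; rewrite !inE; case: (t \in S); case: (c t == f).
have E := eqS7 cX cY disj.
have ES : X f :|: Y f = S.
  by apply/setP => t; rewrite !inE; case: (t \in S); case: (c t == f).
by rewrite ES -UE in E.
Qed.


Theorem proposition14 (V : finType) (U : {set {set V}}) :
  unitrade 5 U -> #|U| = 12 ->
  (exists W W' : {set {set V}},
      [/\ U = W :|: W', W :&: W' = set0,
          unitrade 5 W /\ equivalent W5 W &
          unitrade 5 W' /\ equivalent W5 W'])
  \/ equivalent S7 U.
Proof.
move=> HU cU.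
have HU1 : forall B, B \in U -> #|B| = 5 by case: HU.
case: (boolP [exists v, #|star U v| == 5]) => [/existsP[v /eqP cv] | nv].
  left.
  have [A [cA HW hc]] := peel (erefl : 3 <= 5) HU cv.
  have HS := sdiff_unitrade HU HW.
  have cs := card_sdiff U (Wk A 5); rewrite Wk_card // cU in cs.
  move: HS cs; rewrite /sdiff; set D := (U :\: _) :|: _ => HS cs.
  case: hc => hc; rewrite hc in cs.
    have := gap (erefl : 2 <= 5) HS.
    have -> : #|D| = 8 by clear -cs; lia.
    by move=> /(_ erefl erefl).
  have sWU : Wk A 5 \subset U.
    have : U :&: Wk A 5 == Wk A 5 by rewrite eqEcard subsetIr hc Wk_card.
    by move/eqP <-; rewrite subsetIl.
  have E1 : D = U :\: Wk A 5.
    apply/setP => B; rewrite /D !in_setU !in_setD.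
    case BW: (B \in Wk A 5); last by case: (B \in U).
    by rewrite (subsetP sWU B BW).
  rewrite E1 in HS cs.
  have cW' : #|U :\: Wk A 5| = 6 by clear -cs; lia.
  have W'0 : U :\: Wk A 5 != set0 by rewrite -card_gt0 cW'.
  have [_ _ /(_ cW') [A' [cA' EA']]] := F1 (erefl : 2 <= 5) HS W'0.
  exists (Wk A 5), (U :\: Wk A 5); split.
  - apply/setP => B; rewrite !in_setU !in_setD.
    case BW: (B \in Wk A 5); last by case: (B \in U).
    by rewrite (subsetP sWU B BW).
  - by apply/setP => B; rewrite !in_setI !in_setD in_set0; case: (B \in Wk A 5).
  - by split => //; apply: eqW5.
  - by split => //; rewrite EA'; apply: eqW5.
right.
have deg : forall v, v \in supp U -> 8 <= #|star U v|.
  move=> v; rewrite in_supp => s0.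
  have HL := link_unitrade v (erefl : 2 <= 5) HU.
  have L0 : link U v != set0 by rewrite -card_gt0 card_link.
  have [lo _ _] := F1 (erefl : 2 <= 4) HL L0.
  rewrite leqNgt; apply/negP => lt.
  have := gap (erefl : 2 <= 4) HL; rewrite card_link => /(_ s0 lt) c5.
  by move: nv; rewrite negb_exists => /forallP /(_ v); rewrite c5.
have := sum_lower deg; rewrite sum_star (sum_const_card HU1) cU => hs.
have sUS : forall B, B \in U -> B \subset supp U by move=> B BU; apply: bigcup_sup.
have sub : U \subset Wk (supp U) 5.
  by apply/subsetP => B BU; rewrite inE sUS // HU1.
have cS : #|supp U| = 7.
  have := subset_leq_card sub; rewrite cU.
  case: (ltngtP #|supp U| 6) => [lt6 | gt6 | e6].
  - have : Wk (supp U) 5 \subset [set supp U].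
      apply/subsetP => B; rewrite !inE => /andP[sB /eqP cB].
      by rewrite eqEcard sB cB; clear -lt6; lia.
    by move/subset_leq_card; rewrite cards1 => h1 h2; have := leq_trans h2 h1.
  - by move=> _; clear -gt6 hs; lia.
  - by rewrite Wk_card.
exact: (seven HU cU cS sUS).
Qed.
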